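(* Let $V$ be a finite set of points in $\mathbb{R}^m$ such that the Euclidean distance $d(x,y)=\|x-y\|_2$ restricted to $V$ is an ultrametric, and let $T$ be a generating tree for $V$. Then every pair $\{i,j\}\subseteq V$ obtains revenue $rev(i,j)=1$ in $T$; in particular $rev_T(V)=\binom{|V|}{2}$ and $T$ maximizes the Hierarchical-Revenue objective over all hierarchical clustering trees on $V$.
   Context: A metric is an ultrametric if $d(x,y)\le\max\{d(x,z),d(y,z)\}$ for all $x,y,z$. A generating tree for $V$ is a rooted binary tree $T$ with $|V|$ leaves in bijection with $V$ and $|V|-1$ internal nodes (set $\mathcal N$), with a weight function $W:\mathcal N\to\mathbb{R}_{\ge0}$ such that (i) whenever $N_1$ lies on the path from $N_2$ to the root, $W(N_1)\ge W(N_2)$, and (ii) $d(x,y)=W(\mathrm{LCA}_T(x,y))$ for all distinct $x,y\in V$. A hierarchical clustering tree on $V$ is a rooted binary tree whose leaves are in bijection with $V$; each node is identified with the set of points at the leaves of its subtree, and an internal node with set $S$ whose children have sets $S_1,S_2$ gives the split $S\to(S_1,S_2)$. $\rho(S)=\frac1{|S|}\sum_{u\in S}u$. For a split $S\to(S_1,S_2)$ and $i\in S_1,j\in S_2$, $rev(i,j)=\min\{d(i,j)/\max\{d(i,\rho(S_1)),d(j,\rho(S_2))\},1\}$ (equal to $1$ if the maximum is $0$); for a pair $\{i,j\}$ this is evaluated at the split where $i,j$ are first separated, and $rev_T(V)=\sum_{\{i,j\}\subseteq V}rev(i,j)$. *)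

(* Defs.v *)
From HB Require Import structures.
From mathcomp Require Import all_boot all_order all_algebra.
From mathcomp Require Import reals.
Set Implicit Arguments. Unset Strict Implicit. Unset Printing Implicit Defensive.
Import Order.TTheory GRing.Theory Num.Theory.
Local Open Scope ring_scope.

Section Defs.
Variables (R : realType) (m : nat).
Notation P := 'rV[R]_m.

Definition dist (x y : P) : R := Num.sqrt (\sum_(k < m) (x 0 k - y 0 k) ^+ 2).

Definition ultrametric_on (V : seq P) : Prop :=
  forall x y z, x \in V -> y \in V -> z \in V ->
    dist x y <= Num.max (dist x z) (dist y z).

Inductive btree := BLeaf of P | BNode of btree & btree.

Fixpoint leaves (t : btree) : seq P :=
  match t with BLeaf x => [:: x] | BNode l r => leaves l ++ leaves r end.

Definition hc_tree (V : seq P) (t : btree) : Prop :=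
  uniq (leaves t) /\ perm_eq (leaves t) V.

Definition rho (S : btree) : P :=
  (size (leaves S))%:R^-1 *: \sum_(u <- leaves S) u.

Definition rev_split (S1 S2 : btree) (i j : P) : R :=
  let M := Num.max (dist i (rho S1)) (dist j (rho S2)) in
  if M == 0 then 1 else Num.min (dist i j / M) 1.

Fixpoint hrev (t : btree) (i j : P) : R :=
  match t with
  | BLeaf _ => 0
  | BNode l r =>
      if (i \in leaves l) && (j \in leaves r) then rev_split l r i j
      else if (j \in leaves l) && (i \in leaves r) then rev_split l r j i
      else if (i \in leaves l) && (j \in leaves l) then hrev l i j
      else hrev r i j
  end.

Definition revT (t : btree) : R :=
  let s := leaves t in
  \sum_(k < size s) \sum_(l < size s | (k < l)%N) hrev t (nth 0 s k) (nth 0 s l).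

Inductive wtree := WLeaf of P | WNode of R & wtree & wtree.

Fixpoint wshape (t : wtree) : btree :=
  match t with WLeaf x => BLeaf x | WNode _ l r => BNode (wshape l) (wshape r) end.

Fixpoint weights (t : wtree) : seq R :=
  match t with WLeaf _ => [::] | WNode w l r => w :: weights l ++ weights r end.

(* (i) W >= 0 and W(N1) >= W(N2) whenever N1 is an ancestor of N2;
   (ii) d(x,y) = W(LCA(x,y)): for a node N with children l, r, every x in l
   and y in r (distinct leaves) have N as LCA. *)
Fixpoint generating_conds (t : wtree) : Prop :=
  match t with
  | WLeaf _ => True
  | WNode w l r =>
      [/\ 0 <= w,
          all (fun w' => w' <= w) (weights l ++ weights r),
          (forall x y, x \in leaves (wshape l) -> y \in leaves (wshape r) ->
              dist x y = w /\ dist y x = w),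
          generating_conds l & generating_conds r]
  end.

Definition generating_tree (V : seq P) (t : wtree) : Prop :=
  hc_tree V (wshape t) /\ generating_conds t.

End Defs.

(* Main.v *)
Require Import Defs.
From HB Require Import structures.
From mathcomp Require Import all_boot all_order all_algebra.
From mathcomp Require Import reals.
From mathcomp Require Import ring lra.
Import Order.TTheory GRing.Theory Num.Theory.
Local Open Scope ring_scope.
Set Implicit Arguments. Unset Strict Implicit.

Lemma count_pairs (R : realType) n :
  \sum_(k < n) \sum_(l < n | (k < l)%N) (1:R) = ('C(n,2))%:R.
Proof.
elim: n => [|n IH]; first by rewrite big_ord0.
rewrite big_ord_recr /= [X in _ + X]big1; last first.
  by move=> l; rewrite ltnNge -ltnS ltn_ord.
rewrite addr0.
rewrite (eq_bigr (fun k : 'I_n => \sum_(l < n | (k < l)%N) (1:R) + 1)); last first.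
  move=> k _; rewrite big_mkcond big_ord_recr /= ltn_ord -big_mkcond /=.
  by congr (_ + _); apply: eq_bigl => l.
by rewrite big_split /= IH sumr_const card_ord binS bin1 natrD.
Qed.

Lemma CS_aux (R : realType) (T : Type) (f : T -> R) (s : seq T) (x : R) :
  2 * x * \sum_(u <- s) f u <= (size s)%:R * x ^+ 2 + \sum_(u <- s) f u ^+ 2.
Proof.
elim: s => [|a s IH]; first by rewrite !big_nil mul0r mulr0 addr0.
rewrite !big_cons /= -natr1.
have := sqr_ge0 (x - f a).
set S := \sum_(u <- s) f u in IH *. set Q := \sum_(u <- s) f u ^+2 in IH *.
nra.
Qed.

Lemma CS (R : realType) (T : Type) (f : T -> R) (s : seq T) :
  (\sum_(u <- s) f u) ^+ 2 <= (size s)%:R * \sum_(u <- s) f u ^+ 2.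
Proof.
elim: s => [|a s IH]; first by rewrite !big_nil expr0n /= mul0r.
rewrite !big_cons /= -natr1.
have := @CS_aux R T f s (f a).
set S := \sum_(u <- s) f u in IH *. set Q := \sum_(u <- s) f u ^+2 in IH *.
nra.
Qed.

Lemma dist_le (R : realType) m (x y : 'rV[R]_m) w : 0 <= w ->
  (dist x y <= w) = (\sum_(k < m) (x 0 k - y 0 k) ^+ 2 <= w ^+ 2).
Proof.
move=> w0; rewrite /dist -{1}(ger0_norm w0) -sqrtr_sqr ler_sqrt //.
exact: sqr_ge0.
Qed.

Lemma leaves_ne (R : realType) m (t : btree R m) : (0 < size (leaves t))%N.
Proof. by elim: t => [//|l IHl r IHr] /=; rewrite size_cat addn_gt0 IHl. Qed.

Lemma sum_const_seq (R : realType) (T : Type) (s : seq T) (c : R) :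
  \sum_(u <- s) c = (size s)%:R * c.
Proof.
elim: s => [|a s IH]; first by rewrite big_nil mul0r.
by rewrite big_cons IH /= -natr1; ring.
Qed.

Lemma centroid (R : realType) m (S : btree R m) (i : 'rV[R]_m) w : 0 <= w ->
  (forall u, u \in leaves S -> dist i u <= w) -> dist i (rho S) <= w.
Proof.
move=> w0 H; rewrite dist_le //.
set s := leaves S; set n := size s.
have n0 : 0 < n%:R :> R by rewrite ltr0n leaves_ne.
have ek : forall k, i 0 k - rho S 0 k = n%:R^-1 * \sum_(u <- s) (i 0 k - u 0 k).
  move=> k; rewrite /rho mxE summxE sumrB sum_const_seq -/s -/n.
  field; lra.
apply: (@le_trans _ _ (\sum_(k < m) n%:R^-1 * \sum_(u <- s) (i 0 k - u 0 k) ^+ 2)).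
  apply: ler_sum => k _; rewrite ek exprMn.
  have := @CS R 'rV[R]_m (fun u : 'rV[R]_m => i 0 k - u 0 k) s; rewrite -/n => hc.
  have ni : 0 < n%:R^-1 :> R by rewrite invr_gt0.
  have -> : n%:R^-1 * \sum_(u <- s) (i 0 k - u 0 k) ^+ 2 =
     n%:R^-1 ^+ 2 * (n%:R * \sum_(u <- s) (i 0 k - u 0 k) ^+ 2) by field; lra.
  by apply: ler_wpM2l => //; apply: exprn_ge0; lra.
rewrite -mulr_sumr exchange_big /=.
apply: (@le_trans _ _ (n%:R^-1 * \sum_(u <- s) w ^+ 2)).
  apply: ler_wpM2l; first by rewrite invr_ge0; lra.
  rewrite big_seq [X in _ <= X]big_seq; apply: ler_sum => u us.
  by rewrite -dist_le //; apply: H.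
rewrite sum_const_seq -/n; rewrite mulrA mulVf ?mul1r //; lra.
Qed.

Lemma dist_xx (R : realType) m (x : 'rV[R]_m) : dist x x = 0.
Proof.
rewrite /dist big1 ?sqrtr0 // => k _; by rewrite subrr expr0n.
Qed.

Lemma within (R : realType) m (t : wtree R m) c : 0 <= c ->
  all (fun w' => w' <= c) (weights t) -> generating_conds t ->
  forall x y, x \in leaves (wshape t) -> y \in leaves (wshape t) -> dist x y <= c.
Proof.
move=> c0; elim: t => [a|w l IHl r IHr] /=.
  by move=> _ _ x y; rewrite !inE => /eqP -> /eqP ->; rewrite dist_xx.
move=> /andP [wc]; rewrite all_cat => /andP [al ar] [w0 _ hc gl gr] x y.
rewrite !mem_cat => /orP [xl|xr] /orP [yl|yr].
- exact: IHl.
- by rewrite (hc x y xl yr).1.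
- by rewrite (hc y x yl xr).2.
- exact: IHr.
Qed.

Lemma split_one (R : realType) m (l r : wtree R m) w i j : 0 <= w ->
  all (fun w' => w' <= w) (weights l) -> all (fun w' => w' <= w) (weights r) ->
  generating_conds l -> generating_conds r ->
  i \in leaves (wshape l) -> j \in leaves (wshape r) -> dist i j = w ->
  rev_split (wshape l) (wshape r) i j = 1.
Proof.
move=> w0 al ar gl gr il jr dij.
have a := centroid w0 (fun u hu => within w0 al gl il hu).
have b := centroid w0 (fun u hu => within w0 ar gr jr hu).
rewrite /rev_split; case: eqP => // /eqP Mn0.
set M := Num.max _ _ in Mn0 *.
have Mw : M <= w by rewrite /M ge_max a b.
have M0 : 0 <= M by rewrite /M le_max sqrtr_ge0.
have Mp : 0 < M by rewrite lt_neqAle eq_sym Mn0 M0.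
apply: min_r; rewrite dij ler_pdivlMr //; lra.
Qed.

Lemma hrev_one (R : realType) m (t : wtree R m) : generating_conds t ->
  forall i j, i \in leaves (wshape t) -> j \in leaves (wshape t) -> i != j ->
  hrev (wshape t) i j = 1.
Proof.
elim: t => [a|w l IHl r IHr] /=.
  by move=> _ i j; rewrite !inE => /eqP -> /eqP ->; rewrite eqxx.
move=> [w0 hall hc gl gr] i j hi hj nij.
move: hall; rewrite all_cat => /andP [al ar].
rewrite mem_cat in hi; rewrite mem_cat in hj.
case il: (i \in leaves (wshape l)); case jr: (j \in leaves (wshape r));
case jl: (j \in leaves (wshape l)); case ir: (i \in leaves (wshape r)) => /=;
first [ exact: (split_one w0 al ar gl gr il jr (hc i j il jr).1)
      | exact: (split_one w0 al ar gl gr jl ir (hc j i jl ir).1)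
      | exact: IHl
      | exact: IHr
      | (move: hi hj; rewrite il jl ir jr //=) ].
Qed.

Lemma hrev_le1 (R : realType) m (t : btree R m) i j : hrev t i j <= 1.
Proof.
elim: t => [a|l IHl r IHr] /=; first by rewrite ler01.
have rs : forall a b, rev_split l r a b <= 1.
  by move=> a b; rewrite /rev_split; case: ifP => // _; rewrite ge_min lexx orbT.
by repeat case: ifP => _.
Qed.

Theorem mainTheorem10 (R : realType) (m : nat) (V : seq 'rV[R]_m) (T : wtree R m) :
  uniq V ->
  ultrametric_on V ->
  generating_tree V T ->
  [/\ (forall i j, i \in V -> j \in V -> i != j -> hrev (wshape T) i j = 1),
      revT (wshape T) = ('C(size V, 2))%:R
    & forall T' : btree R m, hc_tree V T' -> revT T' <= revT (wshape T)].
Proof.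
move=> uV _ [[uL pL] gT].
have memV : forall x, (x \in V) = (x \in leaves (wshape T)).
  by move=> x; rewrite (perm_mem pL).
have p1 : forall i j, i \in V -> j \in V -> i != j -> hrev (wshape T) i j = 1.
  by move=> i j; rewrite !memV; exact: hrev_one.
have p2 : revT (wshape T) = ('C(size V, 2))%:R.
  rewrite /revT -(perm_size pL) -count_pairs.
  apply: eq_bigr => k _; apply: eq_bigr => l kl.
  apply: p1; rewrite ?memV ?mem_nth //.
  by rewrite nth_uniq // neq_ltn kl.
split => // T' [uT' pT'].
rewrite p2 /revT (perm_size pT') -count_pairs.
by apply: ler_sum => k _; apply: ler_sum => l _; apply: hrev_le1.
Qed.
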